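(* Fix $h\ge 0$ and consider, for $y\ge (1-\lambda)e^{(\lambda-1)\beta h}$, the piecewise linear ODE in $y$ (with $h$ a parameter) $$\frac{\kappa^2}{2}y^2v_{yy}-rv=\begin{cases}\frac1\beta e^{\lambda\beta h}, & y\ge e^{\lambda\beta h},\\ \frac1\beta y-y\big(\frac1\beta\ln y-\lambda h\big), & e^{(\lambda-1)\beta h}<y<e^{\lambda\beta h},\\ \frac1\beta e^{(\lambda-1)\beta h}+hy, & (1-\lambda)e^{(\lambda-1)\beta h}\le y\le e^{(\lambda-1)\beta h}.\end{cases}$$ Its general solution is $$v(y,h)=\begin{cases}C_1(h)y^{r_1}+C_2(h)y^{r_2}-\frac{1}{r\beta}e^{\lambda\beta h}, & y\ge e^{\lambda\beta h},\\ C_3(h)y^{r_1}+C_4(h)y^{r_2}-\frac{y}{r\beta}+\frac{y}{r\beta}\big(\ln y-\lambda\beta h+\frac{\kappa^2}{2r}\big), & e^{(\lambda-1)\beta h}<y<e^{\lambda\beta h},\\ C_5(h)y^{r_1}+C_6(h)y^{r_2}-\frac1r hy-\frac{1}{r\beta}e^{(\lambda-1)\beta h}, & (1-\lambda)e^{(\lambda-1)\beta h}\le y\le e^{(\lambda-1)\beta h},\end{cases}$$ with arbitrary coefficients $C_1(h),\dots,C_6(h)$. There is a unique choice of differentiable coefficient functions $h\mapsto C_i(h)$, $h\ge 0$, such that: (a) $v(y,h)-yv_y(y,h)\to-\frac{1}{r\beta}e^{\lambda\beta h}$ as $y\to\infty$; (b) $y\mapsto v(y,h)$ is $C^1$ at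 $y=e^{\lambda\beta h}$ and at $y=e^{(\lambda-1)\beta h}$ (smooth fit); (c) the free boundary condition $v_h(y,h)=0$ holds at $y=(1-\lambda)e^{(\lambda-1)\beta h}$ for every $h\ge0$, where $v_h$ is computed from the third-region formula with $y$ held fixed; (d) $C_6(h)\to0$ as $h\to\infty$. This choice is $C_1\equiv 0$ and $C_2,\dots,C_6$ equal to the functions defined in the context.
   Context: Constants: $r>0$ (interest rate, equal to the discount rate), $\mu>r$, $\sigma>0$, $\beta>0$, $\lambda\in(0,1)$, $\kappa:=(\mu-r)/\sigma>0$. Let $r_{1,2}=\frac12\big(1\pm\sqrt{1+8r/\kappa^2}\big)$ be the roots of $z^2-z-2r/\kappa^2=0$, so $r_1>1$, $r_2<0$. Define, for $h\ge0$, $C_6(h):=\frac{(1-\lambda)^{r_1-r_2}}{(r_1-r_2)\beta r}\Big[\frac{1}{1-r_2}e^{(\lambda-1)(1-r_2)\beta h}-\frac{\lambda}{\lambda(1-r_2)-(r_1-r_2)}e^{[\lambda(1-r_2)-(r_1-r_2)]\beta h}\Big]$, $C_4(h):=C_6(h)+\frac{(1-r_1)\kappa^2}{2(r_1-r_2)\beta r^2}e^{(\lambda-1)(1-r_2)\beta h}$, $C_2(h):=C_6(h)+\frac{(1-r_1)\kappa^2}{2(r_1-r_2)\beta r^2}\big[e^{(\lambda-1)(1-r_2)\beta h}-e^{\lambda(1-r_2)\beta h}\big]$, $C_3(h):=\frac{(r_2-1)\kappa^2}{2(r_1-r_2)\beta r^2}e^{\lambda(1-r_1)\beta h}$, $C_5(h):=\frac{(1-r_2)\kappa^2}{2(r_1-r_2)\beta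 r^2}\big[e^{(\lambda-1)(1-r_1)\beta h}-e^{\lambda(1-r_1)\beta h}\big]$. *)

(* Defs.v *)
From Stdlib Require Import Reals.
From Coquelicot Require Import Coquelicot.
Open Scope R_scope.

Section Params.
Variables (r mu sigma beta lam : R).

Definition kappa : R := (mu - r) / sigma.
Definition r1 : R := (1 + sqrt (1 + 8 * r / kappa ^ 2)) / 2.
Definition r2 : R := (1 - sqrt (1 + 8 * r / kappa ^ 2)) / 2.

Definition C6def (h : R) : R :=
  Rpower (1 - lam) (r1 - r2) / ((r1 - r2) * beta * r) *
  (1 / (1 - r2) * exp ((lam - 1) * (1 - r2) * beta * h)
   - lam / (lam * (1 - r2) - (r1 - r2)) *
     exp ((lam * (1 - r2) - (r1 - r2)) * beta * h)).
Definition C4def (h : R) : R :=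
  C6def h + (1 - r1) * kappa ^ 2 / (2 * (r1 - r2) * beta * r ^ 2)
            * exp ((lam - 1) * (1 - r2) * beta * h).
Definition C2def (h : R) : R :=
  C6def h + (1 - r1) * kappa ^ 2 / (2 * (r1 - r2) * beta * r ^ 2)
            * (exp ((lam - 1) * (1 - r2) * beta * h)
               - exp (lam * (1 - r2) * beta * h)).
Definition C3def (h : R) : R :=
  (r2 - 1) * kappa ^ 2 / (2 * (r1 - r2) * beta * r ^ 2)
  * exp (lam * (1 - r1) * beta * h).
Definition C5def (h : R) : R :=
  (1 - r2) * kappa ^ 2 / (2 * (r1 - r2) * beta * r ^ 2)
  * (exp ((lam - 1) * (1 - r1) * beta * h) - exp (lam * (1 - r1) * beta * h)).

(* The three branches of the general solution (y^p := Rpower y p, y > 0). *)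
Definition v1 (C1 C2 : R -> R) (y h : R) : R :=
  C1 h * Rpower y r1 + C2 h * Rpower y r2 - / (r * beta) * exp (lam * beta * h).
Definition v2 (C3 C4 : R -> R) (y h : R) : R :=
  C3 h * Rpower y r1 + C4 h * Rpower y r2 - y / (r * beta)
  + y / (r * beta) * (ln y - lam * beta * h + kappa ^ 2 / (2 * r)).
Definition v3 (C5 C6 : R -> R) (y h : R) : R :=
  C5 h * Rpower y r1 + C6 h * Rpower y r2 - / r * h * y
  - / (r * beta) * exp ((lam - 1) * beta * h).

Definition v (C1 C2 C3 C4 C5 C6 : R -> R) (y h : R) : R :=
  if Rle_dec y (exp ((lam - 1) * beta * h)) then v3 C5 C6 y h
  else if Rlt_dec y (exp (lam * beta * h)) then v2 C3 C4 y h
  else v1 C1 C2 y h.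

Definition ybdry (h : R) : R := (1 - lam) * exp ((lam - 1) * beta * h).

End Params.

(* Derivative of f at h relative to the domain [0, +oo)
   (one-sided at h = 0, two-sided for h > 0). *)
Definition deriv_nonneg (f : R -> R) (h d : R) : Prop :=
  filterlim (fun k => (f k - f h) / (k - h))
    (within (fun k => 0 <= k /\ k <> h) (locally h)) (locally d).

Definition differentiable_nonneg (f : R -> R) : Prop :=
  forall h, 0 <= h -> exists d, deriv_nonneg f h d.

Definition C1_at (f : R -> R) (y0 : R) : Prop :=
  ex_derive f y0 /\ continuous (fun z => Derive f z) y0.

Definition admissible (r mu sigma beta lam : R) (C1 C2 C3 C4 C5 C6 : R -> R) : Prop :=
  let V := v r mu sigma beta lam C1 C2 C3 C4 C5 C6 in
  (differentiable_nonneg C1 /\ differentiable_nonneg C2 /\ differentiable_nonneg C3 /\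
   differentiable_nonneg C4 /\ differentiable_nonneg C5 /\ differentiable_nonneg C6) /\
  (forall h, 0 <= h ->
     is_lim (fun y => V y h - y * Derive (fun z => V z h) y) p_infty
            (- (/ (r * beta)) * exp (lam * beta * h))) /\
  (forall h, 0 <= h ->
     C1_at (fun y => V y h) (exp (lam * beta * h)) /\
     C1_at (fun y => V y h) (exp ((lam - 1) * beta * h))) /\
  (forall h, 0 <= h ->
     deriv_nonneg (fun k => v3 r mu sigma beta lam C5 C6 (ybdry beta lam h) k) h 0) /\
  is_lim C6 p_infty 0.

(* Main.v *)
Require Import Defs.
From Stdlib Require Import Reals Lra Psatz.
From Coquelicot Require Import Coquelicot.
Open Scope R_scope.



Lemma basic_facts r mu sigma : 0 < r -> r < mu -> 0 < sigma ->
  0 < kappa r mu sigma /\ 1 < r1 r mu sigma /\ r2 r mu sigma < 0 /\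
  r1 r mu sigma + r2 r mu sigma = 1 /\
  r1 r mu sigma * r2 r mu sigma * (kappa r mu sigma)^2 = -2 * r.
Proof.
  intros hr hmu hs.
  assert (hk : 0 < kappa r mu sigma) by (unfold kappa; apply Rdiv_lt_0_compat; lra).
  unfold r1, r2. set (k := kappa r mu sigma) in *.
  assert (h8 : 0 < 8 * r / k ^ 2) by (apply Rdiv_lt_0_compat; [lra| apply pow_lt; lra]).
  set (t := 8 * r / k ^ 2) in *.
  assert (hs2 := sqrt_sqrt (1 + t) ltac:(lra)).
  assert (hs0 := sqrt_pos (1 + t)).
  set (s := sqrt (1 + t)) in *.
  assert (1 < s) by nra.
  repeat split; try lra.
  replace ((1 + s) / 2 * ((1 - s) / 2) * k ^ 2) with ((1 - s*s)/4 * k^2) by field.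
  rewrite hs2. unfold t. field. lra.
Qed.

Lemma Rpower_exp u p : Rpower (exp u) p = exp (p * u).
Proof. unfold Rpower. rewrite ln_exp. reflexivity. Qed.

Definition dv1 r mu sigma (C1 C2 : R -> R) (y h : R) :=
  C1 h * r1 r mu sigma * Rpower y (r1 r mu sigma) / y + C2 h * r2 r mu sigma * Rpower y (r2 r mu sigma) / y.

Definition dv2 r mu sigma beta lam (C3 C4 : R -> R) (y h : R) :=
  C3 h * r1 r mu sigma * Rpower y (r1 r mu sigma) / y + C4 h * r2 r mu sigma * Rpower y (r2 r mu sigma) / y
  + (ln y - lam * beta * h + kappa r mu sigma ^ 2 / (2 * r)) / (r * beta).

Definition dv3 r mu sigma (C5 C6 : R -> R) (y h : R) :=
  C5 h * r1 r mu sigma * Rpower y (r1 r mu sigma) / y + C6 h * r2 r mu sigma * Rpower y (r2 r mu sigma) / y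
  - h / r.

Lemma is_derive_v1 r mu sigma beta lam C1 C2 y h : 0 < y ->
  is_derive (fun z => v1 r mu sigma beta lam C1 C2 z h) y (dv1 r mu sigma C1 C2 y h).
Proof. intros hy. unfold v1, dv1, Rpower. auto_derive; [tauto|]. field. lra. Qed.

Lemma is_derive_v2 r mu sigma beta lam C3 C4 y h : 0 < r -> 0 < beta -> 0 < y ->
  is_derive (fun z => v2 r mu sigma beta lam C3 C4 z h) y (dv2 r mu sigma beta lam C3 C4 y h).
Proof. intros hr hb hy. unfold v2, dv2, Rpower. auto_derive; [tauto|]. field. lra. Qed.

Lemma is_derive_v3 r mu sigma beta lam C5 C6 y h : 0 < r -> 0 < y ->
  is_derive (fun z => v3 r mu sigma beta lam C5 C6 z h) y (dv3 r mu sigma C5 C6 y h).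
Proof. intros hr hy. unfold v3, dv3, Rpower. auto_derive; [tauto|]. field. lra. Qed.

Lemma cont_dv1 r mu sigma C1 C2 y h : 0 < y -> continuous (fun z => dv1 r mu sigma C1 C2 z h) y.
Proof. intros hy. assert (H : ex_derive (fun z => dv1 r mu sigma C1 C2 z h) y) by (unfold dv1, Rpower; auto_derive; repeat split; try lra). exact (ex_derive_continuous _ _ H). Qed.

Lemma cont_dv2 r mu sigma beta lam C3 C4 y h : 0 < y -> continuous (fun z => dv2 r mu sigma beta lam C3 C4 z h) y.
Proof. intros hy. assert (H : ex_derive (fun z => dv2 r mu sigma beta lam C3 C4 z h) y) by (unfold dv2, Rpower; auto_derive; repeat split; try lra). exact (ex_derive_continuous _ _ H). Qed.

Lemma cont_dv3 r mu sigma C5 C6 y h : 0 < y -> continuous (fun z => dv3 r mu sigma C5 C6 z h) y.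
Proof. intros hy. assert (H : ex_derive (fun z => dv3 r mu sigma C5 C6 z h) y) by (unfold dv3, Rpower; auto_derive; repeat split; try lra). exact (ex_derive_continuous _ _ H). Qed.



Lemma loc_elim (P : R -> Prop) y0 : locally y0 P -> exists d, 0 < d /\ forall y, Rabs (y - y0) < d -> P y.
Proof.
  intros [d Hd]. exists d. split; [apply cond_pos|]. intros y Hy. apply Hd. exact Hy.
Qed.

Lemma loc_intro (P : R -> Prop) y0 d : 0 < d -> (forall y, Rabs (y - y0) < d -> P y) -> locally y0 P.
Proof.
  intros hd H. exists (mkposreal d hd). intros y Hy. apply H. exact Hy.
Qed.

Lemma glue (f g1 g2 dg1 dg2 : R -> R) y0 :
  locally y0 (fun y => y < y0 -> f y = g1 y) ->
  locally y0 (fun y => y0 < y -> f y = g2 y) ->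
  f y0 = g2 y0 -> g1 y0 = g2 y0 ->
  locally y0 (fun y => is_derive g1 y (dg1 y)) ->
  locally y0 (fun y => is_derive g2 y (dg2 y)) ->
  continuous dg1 y0 -> continuous dg2 y0 -> dg1 y0 = dg2 y0 ->
  C1_at f y0.
Proof.
  intros E1 E2 F0 G0 D1 D2 K1 K2 DD.
  destruct (loc_elim _ _ E1) as [d1 [hd1 H1]].
  destruct (loc_elim _ _ E2) as [d2 [hd2 H2]].
  destruct (loc_elim _ _ D1) as [d3 [hd3 H3]].
  destruct (loc_elim _ _ D2) as [d4 [hd4 H4]].
  assert (Df : is_derive f y0 (dg1 y0)).
  { apply is_derive_Reals. intros eps heps.
    assert (A1 := proj1 (is_derive_Reals _ _ _) (H3 y0 ltac:(rewrite Rminus_diag, Rabs_R0; lra)) eps heps).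
    assert (A2 := proj1 (is_derive_Reals _ _ _) (H4 y0 ltac:(rewrite Rminus_diag, Rabs_R0; lra)) eps heps).
    destruct A1 as [da A1]. destruct A2 as [db A2].
    assert (hdd : 0 < Rmin (Rmin da db) (Rmin d1 d2)).
    { destruct da, db; simpl. repeat apply Rmin_pos; lra. }
    exists (mkposreal _ hdd). intros hh hh0 hhd. simpl in hhd.
    assert (m1 := Rmin_l (Rmin da db) (Rmin d1 d2)). assert (m2 := Rmin_r (Rmin da db) (Rmin d1 d2)).
    assert (m3 := Rmin_l da db). assert (m4 := Rmin_r da db). assert (m5 := Rmin_l d1 d2). assert (m6 := Rmin_r d1 d2).
    assert (hr : Rabs (y0 + hh - y0) = Rabs hh) by (f_equal; ring).
    destruct (Rlt_or_le hh 0) as [hneg|hpos].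
    - rewrite (H1 (y0 + hh)) by (rewrite ?hr; lra).
      rewrite F0, <- G0. apply A1; auto; lra.
    - assert (hp : 0 < hh) by (destruct (Rle_lt_or_eq_dec _ _ hpos); [lra|congruence]).
      rewrite (H2 (y0 + hh)) by (rewrite ?hr; lra).
      rewrite F0, DD. apply A2; auto; lra. }
  split. { exists (dg1 y0). exact Df. }
  unfold continuous; cbv beta; rewrite (is_derive_unique _ _ _ Df).
  apply filterlim_locally. intros eps.
  assert (C1 := proj1 (filterlim_locally _ _) K1 eps).
  assert (C2 := proj1 (filterlim_locally _ _) K2 eps).
  destruct (loc_elim _ _ C1) as [d5 [hd5 H5]].
  destruct (loc_elim _ _ C2) as [d6 [hd6 H6]].
  set (dm := Rmin (Rmin (Rmin d1 d2) (Rmin d3 d4)) (Rmin d5 d6)).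
  assert (hdm : 0 < dm) by (unfold dm; repeat apply Rmin_pos; lra).
  assert (m1 : dm <= d1 /\ dm <= d2 /\ dm <= d3 /\ dm <= d4 /\ dm <= d5 /\ dm <= d6).
  { unfold dm.
    assert (a1 := Rmin_l (Rmin (Rmin d1 d2) (Rmin d3 d4)) (Rmin d5 d6)).
    assert (a2 := Rmin_r (Rmin (Rmin d1 d2) (Rmin d3 d4)) (Rmin d5 d6)).
    assert (a3 := Rmin_l (Rmin d1 d2) (Rmin d3 d4)). assert (a4 := Rmin_r (Rmin d1 d2) (Rmin d3 d4)).
    assert (a5 := Rmin_l d1 d2). assert (a6 := Rmin_r d1 d2). assert (a7 := Rmin_l d3 d4).
    assert (a8 := Rmin_r d3 d4). assert (a9 := Rmin_l d5 d6). assert (a10 := Rmin_r d5 d6).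
    repeat split; lra. }
  apply (loc_intro _ _ dm hdm). intros y hy.
  destruct (Rtotal_order y y0) as [hlt|[heq|hgt]].
  - assert (Dy : Derive f y = dg1 y).
    { rewrite <- (is_derive_unique _ _ _ (H3 y ltac:(lra))).
      apply Derive_ext_loc.
      apply (loc_intro _ _ (Rmin (y0 - y) (dm - Rabs (y - y0)))).
      { apply Rmin_pos; lra. }
      intros t ht. assert (q1 := Rmin_l (y0 - y) (dm - Rabs (y - y0))).
      assert (q2 := Rmin_r (y0 - y) (dm - Rabs (y - y0))).
      apply H1. { assert (Rabs (t - y0) <= Rabs (t - y) + Rabs (y - y0)) by
        (replace (t - y0) with ((t - y) + (y - y0)) by ring; apply Rabs_triang). lra. }
      apply Rabs_def2 in ht. lra. }
    rewrite Dy. apply H5. lra.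
  - subst y. rewrite (is_derive_unique _ _ _ Df). apply H5. rewrite Rminus_diag, Rabs_R0. lra.
  - assert (Dy : Derive f y = dg2 y).
    { rewrite <- (is_derive_unique _ _ _ (H4 y ltac:(lra))).
      apply Derive_ext_loc.
      apply (loc_intro _ _ (Rmin (y - y0) (dm - Rabs (y - y0)))).
      { apply Rmin_pos; lra. }
      intros t ht. assert (q1 := Rmin_l (y - y0) (dm - Rabs (y - y0))).
      assert (q2 := Rmin_r (y - y0) (dm - Rabs (y - y0))).
      apply H2. { assert (Rabs (t - y0) <= Rabs (t - y) + Rabs (y - y0)) by
        (replace (t - y0) with ((t - y) + (y - y0)) by ring; apply Rabs_triang). lra. }
      apply Rabs_def2 in ht. lra. }
    rewrite Dy, DD. apply H6. lra.
Qed.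



Lemma eq_by_eps x y : (forall eps, 0 < eps -> Rabs (x - y) < eps) -> x = y.
Proof.
  intros H. destruct (Req_dec x y) as [e|ne]; [exact e|].
  assert (0 < Rabs (x - y)) by (apply Rabs_pos_lt; lra).
  specialize (H _ H0). lra.
Qed.

Lemma cont_elim f y0 eps : continuous f y0 -> 0 < eps ->
  exists d, 0 < d /\ forall y, Rabs (y - y0) < d -> Rabs (f y - f y0) < eps.
Proof.
  intros Hc he. assert (C := proj1 (filterlim_locally _ _) Hc (mkposreal _ he)).
  destruct (loc_elim _ _ C) as [d [hd H]]. exists d. split; [exact hd|].
  intros y hy. apply H; auto.
Qed.

Lemma side_val (f g : R -> R) y0 d s : 0 < d -> s * s = 1 ->
  (forall t, 0 < t < d -> f (y0 + s * t) = g (y0 + s * t)) ->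
  continuous f y0 -> continuous g y0 -> f y0 = g y0.
Proof.
  intros hd hs E Cf Cg. apply eq_by_eps. intros eps he.
  destruct (cont_elim f y0 (eps/2) Cf ltac:(lra)) as [d1 [hd1 H1]].
  destruct (cont_elim g y0 (eps/2) Cg ltac:(lra)) as [d2 [hd2 H2]].
  set (t := Rmin d (Rmin d1 d2) / 2).
  assert (m1 := Rmin_l d (Rmin d1 d2)). assert (m2 := Rmin_r d (Rmin d1 d2)).
  assert (m3 := Rmin_l d1 d2). assert (m4 := Rmin_r d1 d2).
  assert (ht : 0 < t) by (unfold t; assert (0 < Rmin d (Rmin d1 d2)) by (repeat apply Rmin_pos; lra); lra).
  assert (hst : Rabs (y0 + s * t - y0) = t).
  { replace (y0 + s * t - y0) with (s * t) by ring. rewrite Rabs_mult.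
    assert (Rabs s = 1). { assert (Rabs s * Rabs s = 1) by (rewrite <- Rabs_mult, hs; apply Rabs_R1).
      assert (0 <= Rabs s) by apply Rabs_pos. nra. }
    rewrite H, Rabs_pos_eq; lra. }
  specialize (H1 (y0 + s * t) ltac:(rewrite hst; unfold t; lra)).
  specialize (H2 (y0 + s * t) ltac:(rewrite hst; unfold t; lra)).
  rewrite E in H1 by (split; [exact ht| unfold t; lra]).
  replace (f y0 - g y0) with ((g (y0 + s * t) - g y0) - (g (y0 + s * t) - f y0)) by ring.
  eapply Rle_lt_trans; [apply Rabs_triang|]. rewrite Rabs_Ropp. lra.
Qed.

Lemma side_der (f g : R -> R) y0 d s df dg : 0 < d -> s * s = 1 ->
  (forall t, 0 < t < d -> f (y0 + s * t) = g (y0 + s * t)) -> f y0 = g y0 ->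
  is_derive f y0 df -> is_derive g y0 dg -> df = dg.
Proof.
  intros hd hs E E0 Df Dg. apply is_derive_Reals in Df. apply is_derive_Reals in Dg.
  apply eq_by_eps. intros eps he.
  destruct (Df (eps/2) ltac:(lra)) as [d1 H1]. destruct (Dg (eps/2) ltac:(lra)) as [d2 H2].
  destruct d1 as [d1 hd1]; destruct d2 as [d2 hd2]; simpl in *.
  set (t := Rmin d (Rmin d1 d2) / 2).
  assert (m1 := Rmin_l d (Rmin d1 d2)). assert (m2 := Rmin_r d (Rmin d1 d2)).
  assert (m3 := Rmin_l d1 d2). assert (m4 := Rmin_r d1 d2).
  assert (ht : 0 < t) by (unfold t; assert (0 < Rmin d (Rmin d1 d2)) by (repeat apply Rmin_pos; lra); lra).
  assert (has : Rabs s = 1). { assert (Rabs s * Rabs s = 1) by (rewrite <- Rabs_mult, hs; apply Rabs_R1).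
      assert (0 <= Rabs s) by apply Rabs_pos. nra. }
  assert (hst : Rabs (s * t) = t) by (rewrite Rabs_mult, has, Rabs_pos_eq; lra).
  assert (hs0 : s * t <> 0) by (intro H; rewrite H, Rabs_R0 in hst; lra).
  specialize (H1 (s * t) hs0 ltac:(rewrite hst; unfold t; lra)).
  specialize (H2 (s * t) hs0 ltac:(rewrite hst; unfold t; lra)).
  rewrite E, E0 in H1 by (split; [exact ht| unfold t; lra]).
  set (q := (g (y0 + s * t) - g y0) / (s * t)) in *.
  replace (df - dg) with ((q - dg) - (q - df)) by ring.
  eapply Rle_lt_trans; [apply Rabs_triang|]. rewrite Rabs_Ropp. lra.
Qed.

Lemma derive_to_nonneg f h d : is_derive f h d -> deriv_nonneg f h d.
Proof.
  intros D. apply is_derive_Reals in D. unfold deriv_nonneg.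
  apply filterlim_locally. intros eps.
  destruct (D eps (cond_pos eps)) as [dl H].
  exists dl. intros k hk [_ hkh]. 
  assert (hne : k - h <> 0) by (intro E; apply hkh; apply Rminus_diag_uniq; exact E).
  specialize (H (k - h) hne hk). replace (h + (k - h)) with (k:R) in H by (unfold Rminus; rewrite Rplus_comm, Rplus_assoc, Rplus_opp_l, Rplus_0_r; reflexivity).
  exact H.
Qed.

Lemma nonneg_to_derive f h d : 0 < h -> deriv_nonneg f h d -> is_derive f h d.
Proof.
  intros hh D. apply is_derive_Reals. intros eps heps.
  destruct (loc_elim _ _ (proj1 (filterlim_locally _ _) D (mkposreal _ heps))) as [dl [hdl H]].
  assert (hm : 0 < Rmin dl h) by (apply Rmin_pos; lra).
  exists (mkposreal _ hm). intros t ht0 ht. simpl in ht.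
  assert (m1 := Rmin_l dl h). assert (m2 := Rmin_r dl h).
  assert (e : Rabs (h + t - h) = Rabs t) by (f_equal; ring).
  assert (hk := H (h + t) ltac:(rewrite e; lra)).
  apply Rabs_def2 in ht.
  specialize (hk ltac:(split; lra)). replace (h + t - h) with t in hk by ring. exact hk.
Qed.

Lemma nonneg_unique f h d1 d2 : 0 <= h -> deriv_nonneg f h d1 -> deriv_nonneg f h d2 -> d1 = d2.
Proof.
  intros hh D1 D2. apply eq_by_eps. intros eps he.
  destruct (loc_elim _ _ (proj1 (filterlim_locally _ _) D1 (mkposreal (eps/2) ltac:(lra)))) as [a [ha H1]].
  destruct (loc_elim _ _ (proj1 (filterlim_locally _ _) D2 (mkposreal (eps/2) ltac:(lra)))) as [b [hb H2]].
  set (k := h + Rmin a b / 2).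
  assert (m1 := Rmin_l a b). assert (m2 := Rmin_r a b). assert (0 < Rmin a b) by (apply Rmin_pos; lra).
  assert (e : Rabs (k - h) = Rmin a b / 2) by (unfold k; rewrite Rabs_pos_eq; lra).
  specialize (H1 k ltac:(rewrite e; lra) ltac:(unfold k; split; lra)).
  specialize (H2 k ltac:(rewrite e; lra) ltac:(unfold k; split; lra)).
  change (Rabs ((f k - f h) / (k - h) - d1) < eps/2) in H1.
  change (Rabs ((f k - f h) / (k - h) - d2) < eps/2) in H2.
  set (q := (f k - f h) / (k - h)) in *.
  replace (d1 - d2) with ((q - d2) - (q - d1)) by ring.
  eapply Rle_lt_trans; [apply Rabs_triang|]. rewrite Rabs_Ropp. lra.
Qed.

Lemma nonneg_right_eq f g d : deriv_nonneg f 0 d -> (forall k, 0 < k -> f k = g k) ->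
  continuous g 0 -> f 0 = g 0.
Proof.
  intros D E Cg. apply eq_by_eps. intros eps he.
  destruct (loc_elim _ _ (proj1 (filterlim_locally _ _) D (mkposreal 1 Rlt_0_1))) as [a [ha H1]].
  destruct (cont_elim g 0 (eps/2) Cg ltac:(lra)) as [b [hb H2]].
  set (M := Rabs d + 1).
  assert (hM : 0 < M) by (unfold M; assert (0 <= Rabs d) by apply Rabs_pos; lra).
  set (k := Rmin (Rmin a b) (eps / (2 * M)) / 2).
  assert (m1 := Rmin_l (Rmin a b) (eps / (2 * M))). assert (m2 := Rmin_r (Rmin a b) (eps / (2 * M))).
  assert (m3 := Rmin_l a b). assert (m4 := Rmin_r a b).
  assert (0 < eps / (2 * M)) by (apply Rdiv_lt_0_compat; lra).
  assert (0 < Rmin (Rmin a b) (eps / (2 * M))) by (repeat apply Rmin_pos; lra).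
  assert (hk : 0 < k) by (unfold k; lra).
  assert (e : Rabs (k - 0) = k) by (rewrite Rminus_0_r, Rabs_pos_eq; lra).
  specialize (H1 k ltac:(rewrite e; unfold k; lra) ltac:(split; lra)).
  specialize (H2 k ltac:(rewrite e; unfold k; lra)).
  change (Rabs ((f k - f 0) / (k - 0) - d) < 1) in H1.
  rewrite Rminus_0_r in H1.
  assert (B : Rabs (f k - f 0) <= M * k).
  { replace (f k - f 0) with (((f k - f 0) / k - d) * k + d * k) by (field; lra).
    eapply Rle_trans; [apply Rabs_triang|]. rewrite !Rabs_mult, (Rabs_pos_eq k) by lra.
    unfold M. nra. }
  assert (Mk : M * k < eps / 2).
  { assert (hk2 : k < eps / (2 * M)) by (unfold k; lra).
    apply Rmult_lt_compat_l with (r := M) in hk2; auto.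
    replace (M * (eps / (2 * M))) with (eps/2) in hk2 by (field; lra). lra. }
  rewrite (E k) in B by lra.
  replace (f 0 - g 0) with ((g k - g 0) - (g k - f 0)) by ring.
  eapply Rle_lt_trans; [apply Rabs_triang|]. rewrite Rabs_Ropp.
  lra.
Qed.



Definition cc r mu sigma beta y := y * kappa r mu sigma ^ 2 / (2 * r ^ 2 * beta).

Lemma IdA1 r mu sigma beta lam C1 C2 C3 C4 h : 0 < r -> 0 < beta ->
  let a := lam * beta * h in
  v2 r mu sigma beta lam C3 C4 (exp a) h - v1 r mu sigma beta lam C1 C2 (exp a) h =
  C3 h * exp (r1 r mu sigma * a) + (C4 h - C2 h) * exp (r2 r mu sigma * a)
  + cc r mu sigma beta (exp a) - C1 h * exp (r1 r mu sigma * a).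
Proof.
  intros hr hb a. unfold v1, v2, cc. rewrite !Rpower_exp, ln_exp. unfold a. field. lra.
Qed.

Lemma IdA2 r mu sigma beta lam C1 C2 C3 C4 h : 0 < r -> 0 < beta ->
  let a := lam * beta * h in
  exp a * (dv2 r mu sigma beta lam C3 C4 (exp a) h - dv1 r mu sigma C1 C2 (exp a) h) =
  r1 r mu sigma * (C3 h * exp (r1 r mu sigma * a)) + r2 r mu sigma * ((C4 h - C2 h) * exp (r2 r mu sigma * a))
  + cc r mu sigma beta (exp a) - r1 r mu sigma * (C1 h * exp (r1 r mu sigma * a)).
Proof.
  intros hr hb a. unfold dv1, dv2, cc. rewrite !Rpower_exp, ln_exp. unfold a.
  field. split; [lra|]. split; [lra|]. apply Rgt_not_eq, exp_pos.
Qed.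

Lemma IdB1 r mu sigma beta lam C3 C4 C5 C6 h : 0 < r -> 0 < beta ->
  let b := (lam - 1) * beta * h in
  v2 r mu sigma beta lam C3 C4 (exp b) h - v3 r mu sigma beta lam C5 C6 (exp b) h =
  (C3 h - C5 h) * exp (r1 r mu sigma * b) + (C4 h - C6 h) * exp (r2 r mu sigma * b)
  + cc r mu sigma beta (exp b).
Proof.
  intros hr hb b. unfold v3, v2, cc. rewrite !Rpower_exp, ln_exp. unfold b. field. lra.
Qed.

Lemma IdB2 r mu sigma beta lam C3 C4 C5 C6 h : 0 < r -> 0 < beta ->
  let b := (lam - 1) * beta * h in
  exp b * (dv2 r mu sigma beta lam C3 C4 (exp b) h - dv3 r mu sigma C5 C6 (exp b) h) =
  r1 r mu sigma * ((C3 h - C5 h) * exp (r1 r mu sigma * b)) + r2 r mu sigma * ((C4 h - C6 h) * exp (r2 r mu sigma * b))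
  + cc r mu sigma beta (exp b).
Proof.
  intros hr hb b. unfold dv3, dv2, cc. rewrite !Rpower_exp, ln_exp. unfold b.
  field. split; [lra|]. split; [lra|]. apply Rgt_not_eq, exp_pos.
Qed.

Lemma lin_solve p q X Y c : p <> q ->
  (X + Y + c = 0 /\ p * X + q * Y + c = 0) <->
  (X = - (1 - q) * c / (p - q) /\ Y = (1 - p) * c / (p - q)).
Proof.
  intros hpq. assert (p - q <> 0) by lra. split.
  - intros [E1 E2]. split.
    + apply Rmult_eq_reg_l with (p - q); auto.
      transitivity ((p * X + q * Y + c) - q * (X + Y + c) - (1 - q) * c); [ring|].
      rewrite E1, E2. field. auto.
    + apply Rmult_eq_reg_l with (p - q); auto.
      transitivity (p * (X + Y + c) - (p * X + q * Y + c) + (1 - p) * c); [ring|].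
      rewrite E1, E2. field. auto.
  - intros [-> ->]. split; field; auto.
Qed.

Lemma exp_split x y z : x = y - z -> exp x = exp y / exp z.
Proof. intros ->. unfold Rminus. rewrite exp_plus, exp_Ropp. reflexivity. Qed.

Lemma DefA1 r mu sigma beta lam h : 0 < r -> 0 < beta -> r1 r mu sigma <> r2 r mu sigma ->
  let a := lam * beta * h in
  C3def r mu sigma beta lam h * exp (r1 r mu sigma * a) =
  - (1 - r2 r mu sigma) * cc r mu sigma beta (exp a) / (r1 r mu sigma - r2 r mu sigma).
Proof.
  intros hr hb hne a. unfold C3def, cc.
  rewrite (exp_split (lam * (1 - r1 r mu sigma) * beta * h) a (r1 r mu sigma * a)) by (unfold a; ring).
  field. repeat split; try lra. apply Rgt_not_eq, exp_pos.
Qed.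

Lemma DefA2 r mu sigma beta lam h : 0 < r -> 0 < beta -> r1 r mu sigma <> r2 r mu sigma ->
  let a := lam * beta * h in
  (C4def r mu sigma beta lam h - C2def r mu sigma beta lam h) * exp (r2 r mu sigma * a) =
  (1 - r1 r mu sigma) * cc r mu sigma beta (exp a) / (r1 r mu sigma - r2 r mu sigma).
Proof.
  intros hr hb hne a. unfold C4def, C2def, cc.
  rewrite (exp_split (lam * (1 - r2 r mu sigma) * beta * h) a (r2 r mu sigma * a)) by (unfold a; ring).
  field. repeat split; try lra. apply Rgt_not_eq, exp_pos.
Qed.

Lemma DefB1 r mu sigma beta lam h : 0 < r -> 0 < beta -> r1 r mu sigma <> r2 r mu sigma ->
  let b := (lam - 1) * beta * h in
  (C3def r mu sigma beta lam h - C5def r mu sigma beta lam h) * exp (r1 r mu sigma * b) =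
  - (1 - r2 r mu sigma) * cc r mu sigma beta (exp b) / (r1 r mu sigma - r2 r mu sigma).
Proof.
  intros hr hb hne b. unfold C3def, C5def, cc.
  rewrite (exp_split ((lam - 1) * (1 - r1 r mu sigma) * beta * h) b (r1 r mu sigma * b)) by (unfold b; ring).
  field. repeat split; try lra. apply Rgt_not_eq, exp_pos.
Qed.

Lemma DefB2 r mu sigma beta lam h : 0 < r -> 0 < beta -> r1 r mu sigma <> r2 r mu sigma ->
  let b := (lam - 1) * beta * h in
  (C4def r mu sigma beta lam h - C6def r mu sigma beta lam h) * exp (r2 r mu sigma * b) =
  (1 - r1 r mu sigma) * cc r mu sigma beta (exp b) / (r1 r mu sigma - r2 r mu sigma).
Proof.
  intros hr hb hne b. unfold C4def, cc.
  rewrite (exp_split ((lam - 1) * (1 - r2 r mu sigma) * beta * h) b (r2 r mu sigma * b)) by (unfold b; ring).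
  field. repeat split; try lra. apply Rgt_not_eq, exp_pos.
Qed.



Definition dC5 r mu sigma beta lam h :=
  (1 - r2 r mu sigma) * kappa r mu sigma ^ 2 / (2 * (r1 r mu sigma - r2 r mu sigma) * beta * r ^ 2)
  * ((lam - 1) * (1 - r1 r mu sigma) * beta * exp ((lam - 1) * (1 - r1 r mu sigma) * beta * h)
     - lam * (1 - r1 r mu sigma) * beta * exp (lam * (1 - r1 r mu sigma) * beta * h)).

Definition dC6 r mu sigma beta lam h :=
  Rpower (1 - lam) (r1 r mu sigma - r2 r mu sigma) / ((r1 r mu sigma - r2 r mu sigma) * beta * r) *
  (1 / (1 - r2 r mu sigma) * ((lam - 1) * (1 - r2 r mu sigma) * beta) * exp ((lam - 1) * (1 - r2 r mu sigma) * beta * h)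
   - lam / (lam * (1 - r2 r mu sigma) - (r1 r mu sigma - r2 r mu sigma)) *
     ((lam * (1 - r2 r mu sigma) - (r1 r mu sigma - r2 r mu sigma)) * beta) *
     exp ((lam * (1 - r2 r mu sigma) - (r1 r mu sigma - r2 r mu sigma)) * beta * h)).

Lemma is_derive_C5 r mu sigma beta lam h : r <> 0 -> beta <> 0 -> r1 r mu sigma - r2 r mu sigma <> 0 -> is_derive (C5def r mu sigma beta lam) h (dC5 r mu sigma beta lam h).
Proof. intros. unfold C5def, dC5. auto_derive; [exact I|]. field. tauto. Qed.

Lemma is_derive_C6 r mu sigma beta lam h : r <> 0 -> beta <> 0 -> r1 r mu sigma - r2 r mu sigma <> 0 ->
  1 - r2 r mu sigma <> 0 -> lam * (1 - r2 r mu sigma) - (r1 r mu sigma - r2 r mu sigma) <> 0 -> is_derive (C6def r mu sigma beta lam) h (dC6 r mu sigma beta lam h).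
Proof. intros. unfold C6def, dC6. auto_derive; [exact I|]. field. tauto. Qed.

Lemma exp_split4 x y z w t : x = y + z - w - t -> exp x = exp y * exp z / (exp w * exp t).
Proof. intros ->. unfold Rminus. rewrite !exp_plus, !exp_Ropp. field. split; apply Rgt_not_eq, exp_pos. Qed.

Lemma key_c r mu sigma beta lam h : 0 < r -> 0 < beta -> 0 < lam -> lam < 1 ->
  1 < r1 r mu sigma -> r1 r mu sigma + r2 r mu sigma = 1 ->
  kappa r mu sigma ^ 2 = -2 * r / (r1 r mu sigma * r2 r mu sigma) ->
  let Y := ybdry beta lam h in
  dC5 r mu sigma beta lam h * Rpower Y (r1 r mu sigma) + dC6 r mu sigma beta lam h * Rpower Y (r2 r mu sigma)
  - / r * Y - / (r * beta) * ((lam - 1) * beta * exp ((lam - 1) * beta * h)) = 0.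
Proof.
  intros hr hb hl0 hl1 hr1 hsum hk Y. unfold Y, ybdry, dC5, dC6.
  assert (h1l : 0 < 1 - lam) by lra.
  rewrite <- !Rpower_mult_distr by (auto; apply exp_pos).
  rewrite !Rpower_exp.
  replace (Rpower (1 - lam) (r1 r mu sigma - r2 r mu sigma)) with
    (Rpower (1 - lam) (r1 r mu sigma) / Rpower (1 - lam) (r2 r mu sigma))
    by (unfold Rminus, Rdiv; rewrite Rpower_plus, Rpower_Ropp; reflexivity).
  set (u := (lam - 1) * beta * h).
  rewrite (exp_split4 ((lam - 1) * (1 - r1 r mu sigma) * beta * h) u 0 (r1 r mu sigma * u) 0) by (unfold u; ring).
  rewrite (exp_split4 (lam * (1 - r1 r mu sigma) * beta * h) u (beta * h) (r1 r mu sigma * u) (r1 r mu sigma * beta * h)) by (unfold u; ring).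
  rewrite (exp_split4 ((lam - 1) * (1 - r2 r mu sigma) * beta * h) u 0 (r2 r mu sigma * u) 0) by (unfold u; ring).
  rewrite (exp_split4 ((lam * (1 - r2 r mu sigma) - (r1 r mu sigma - r2 r mu sigma)) * beta * h) u (beta * h) (r2 r mu sigma * u) (r1 r mu sigma * beta * h)) by (unfold u; ring).
  rewrite hk.
  assert (hr2 : r2 r mu sigma = 1 - r1 r mu sigma) by lra.
  rewrite hr2.
  assert (P1 := exp_pos (r1 r mu sigma * u)). assert (P2 := exp_pos ((1 - r1 r mu sigma) * u)).
  assert (P3 := exp_pos (r1 r mu sigma * beta * h)). assert (P4 : 0 < Rpower (1 - lam) (1 - r1 r mu sigma)) by apply exp_pos.
  assert (P5 := exp_pos 0).
  field. repeat split; try lra; nra.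
Qed.



Lemma mult_neg_pinf p : p < 0 -> Rbar_mult p p_infty = m_infty.
Proof.
  intros hp. simpl. destruct (Rle_dec 0 p) as [H|H]; [exfalso; lra|reflexivity].
Qed.

Lemma lim_exp_comp g : is_lim g p_infty m_infty -> is_lim (fun y => exp (g y)) p_infty 0.
Proof.
  intros H. apply (is_lim_comp exp g p_infty 0 m_infty is_lim_exp_m H).
  exists 0. intros; discriminate.
Qed.

Lemma lim_rpow_neg p : p < 0 -> is_lim (fun y => Rpower y p) p_infty 0.
Proof.
  intros hp. unfold Rpower. apply lim_exp_comp.
  rewrite <- (mult_neg_pinf p hp). apply is_lim_scal_l. apply is_lim_ln_p.
Qed.

Lemma lim_exp_neg c : c < 0 -> is_lim (fun h => exp (c * h)) p_infty 0.
Proof.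
  intros hc. apply lim_exp_comp.
  rewrite <- (mult_neg_pinf c hc). apply is_lim_scal_l. apply is_lim_id.
Qed.

Lemma lim_scal0 f a x : is_lim f x 0 -> is_lim (fun y => a * f y) x 0.
Proof. intros H. assert (H' := is_lim_scal_l f a x 0 H). simpl in H'. rewrite Rmult_0_r in H'. exact H'. Qed.

Lemma lim_C6 r mu sigma beta lam : 0 < beta -> 0 < lam -> lam < 1 -> 1 < r1 r mu sigma -> r2 r mu sigma < 0 ->
  is_lim (C6def r mu sigma beta lam) p_infty 0.
Proof.
  intros hb hl0 hl1 hr1 hr2. unfold C6def.
  set (K := Rpower (1 - lam) (r1 r mu sigma - r2 r mu sigma) / ((r1 r mu sigma - r2 r mu sigma) * beta * r)).
  set (c1 := (lam - 1) * (1 - r2 r mu sigma) * beta).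
  set (c2 := (lam * (1 - r2 r mu sigma) - (r1 r mu sigma - r2 r mu sigma)) * beta).
  assert (h1 : c1 < 0). { unfold c1. assert (0 < (1 - lam) * (1 - r2 r mu sigma) * beta) by (repeat apply Rmult_lt_0_compat; lra). nra. }
  assert (h2 : c2 < 0). { unfold c2. assert (lam * (1 - r2 r mu sigma) - (r1 r mu sigma - r2 r mu sigma) < 0) by nra.
    assert (0 < - (lam * (1 - r2 r mu sigma) - (r1 r mu sigma - r2 r mu sigma)) * beta) by (apply Rmult_lt_0_compat; lra). nra. }
  apply (is_lim_ext (fun h => K * (1 / (1 - r2 r mu sigma) * exp (c1 * h) + (- (lam / (lam * (1 - r2 r mu sigma) - (r1 r mu sigma - r2 r mu sigma)))) * exp (c2 * h)))).
  { intros y. unfold c1, c2. f_equal. rewrite !Rmult_assoc. ring. }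
  apply lim_scal0. replace 0 with (0 + 0) by ring. apply is_lim_plus'.
  - apply lim_scal0. apply lim_exp_neg; auto.
  - apply lim_scal0. apply lim_exp_neg; auto.
Qed.



Lemma ab_le beta lam h : 0 < beta -> 0 <= h -> exp ((lam - 1) * beta * h) <= exp (lam * beta * h).
Proof. intros hb hh. destruct (Req_dec h 0) as [->|hn]; [right; f_equal; ring|]. left. apply exp_increasing. nra. Qed.
Lemma ab_lt beta lam h : 0 < beta -> 0 < h -> exp ((lam - 1) * beta * h) < exp (lam * beta * h).
Proof. intros hb hh. apply exp_increasing. nra. Qed.


Lemma reg1 r mu sigma beta lam C1 C2 C3 C4 C5 C6 y h : 0 < beta -> 0 <= h -> exp (lam * beta * h) < y ->
  v r mu sigma beta lam C1 C2 C3 C4 C5 C6 y h = v1 r mu sigma beta lam C1 C2 y h.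
Proof.
  intros hb hh hy. assert (H := ab_le beta lam h hb hh). unfold v.
  destruct (Rle_dec _ _); [lra|]. destruct (Rlt_dec _ _); [lra|]. reflexivity.
Qed.
Lemma reg1' r mu sigma beta lam C1 C2 C3 C4 C5 C6 h : 0 < beta -> 0 < h ->
  v r mu sigma beta lam C1 C2 C3 C4 C5 C6 (exp (lam * beta * h)) h = v1 r mu sigma beta lam C1 C2 (exp (lam * beta * h)) h.
Proof.
  intros hb hh. assert (H := ab_lt beta lam h hb hh). unfold v.
  destruct (Rle_dec _ _); [lra|]. destruct (Rlt_dec _ _); [lra|]. reflexivity.
Qed.
Lemma reg2 r mu sigma beta lam C1 C2 C3 C4 C5 C6 y h :
  exp ((lam - 1) * beta * h) < y -> y < exp (lam * beta * h) ->
  v r mu sigma beta lam C1 C2 C3 C4 C5 C6 y h = v2 r mu sigma beta lam C3 C4 y h.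
Proof.
  intros h1 h2. unfold v.
  destruct (Rle_dec _ _); [lra|]. destruct (Rlt_dec _ _); [|lra]. reflexivity.
Qed.
Lemma reg3 r mu sigma beta lam C1 C2 C3 C4 C5 C6 y h :
  y <= exp ((lam - 1) * beta * h) ->
  v r mu sigma beta lam C1 C2 C3 C4 C5 C6 y h = v3 r mu sigma beta lam C5 C6 y h.
Proof.
  intros h1. unfold v. destruct (Rle_dec _ _); [reflexivity|lra].
Qed.

Lemma F1_expr r mu sigma beta lam C1 C2 C3 C4 C5 C6 y h : 0 < r -> 0 < beta -> 0 <= h -> exp (lam * beta * h) < y ->
  v r mu sigma beta lam C1 C2 C3 C4 C5 C6 y h - y * Derive (fun z => v r mu sigma beta lam C1 C2 C3 C4 C5 C6 z h) y
  = C1 h * (1 - r1 r mu sigma) * Rpower y (r1 r mu sigma) + C2 h * (1 - r2 r mu sigma) * Rpower y (r2 r mu sigma)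
    - / (r * beta) * exp (lam * beta * h).
Proof.
  intros hr hb hh hy. assert (hy0 : 0 < y) by (assert (H := exp_pos (lam * beta * h)); lra).
  rewrite (reg1 _ _ _ _ _ C1 C2 C3 C4 C5 C6 y h) by auto.
  rewrite (Derive_ext_loc _ (fun z => v1 r mu sigma beta lam C1 C2 z h)).
  2: { apply (loc_intro _ _ (y - exp (lam * beta * h))); [lra|]. intros z hz.
       apply Rabs_def2 in hz. apply reg1; auto; lra. }
  match goal with |- context [Derive ?f y] => replace (Derive f y) with (dv1 r mu sigma C1 C2 y h)
    by (symmetry; apply is_derive_unique; apply is_derive_v1; exact hy0) end.
  unfold v1, dv1. field. lra.
Qed.

Lemma a_exist r mu sigma beta lam C2 C3 C4 C5 C6 h : 0 < r -> 0 < beta -> 0 <= h -> r2 r mu sigma < 0 ->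
  is_lim (fun y => v r mu sigma beta lam (fun _ => 0) C2 C3 C4 C5 C6 y h
     - y * Derive (fun z => v r mu sigma beta lam (fun _ => 0) C2 C3 C4 C5 C6 z h) y) p_infty
     (- (/ (r * beta)) * exp (lam * beta * h)).
Proof.
  intros hr hb hh hr2.
  apply (is_lim_ext_loc (fun y => C2 h * (1 - r2 r mu sigma) * Rpower y (r2 r mu sigma) + (- (/ (r * beta)) * exp (lam * beta * h)))).
  { exists (exp (lam * beta * h)). intros y hy. rewrite F1_expr by auto. ring. }
  replace (Finite (- / (r * beta) * exp (lam * beta * h))) with
    (Finite (0 + (- / (r * beta) * exp (lam * beta * h)))) by (f_equal; ring).
  apply is_lim_plus'.
  - apply lim_scal0. apply lim_rpow_neg. exact hr2.
  - apply is_lim_const.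
Qed.

Lemma C1_zero r mu sigma beta lam C1 C2 C3 C4 C5 C6 h : 0 < r -> 0 < beta -> 0 <= h ->
  1 < r1 r mu sigma -> r2 r mu sigma < 0 ->
  is_lim (fun y => v r mu sigma beta lam C1 C2 C3 C4 C5 C6 y h
     - y * Derive (fun z => v r mu sigma beta lam C1 C2 C3 C4 C5 C6 z h) y) p_infty
     (- (/ (r * beta)) * exp (lam * beta * h)) -> C1 h = 0.
Proof.
  intros hr hb hh hr1 hr2 H.
  set (L := - (/ (r * beta)) * exp (lam * beta * h)) in *.
  assert (Hb := H (fun z => Rabs (z - L) < 1) (loc_intro _ _ 1 Rlt_0_1 (fun z hz => hz))).
  destruct Hb as [M HM].
  set (c := Rabs (C1 h * (1 - r1 r mu sigma))).
  set (K := 1 + Rabs (C2 h * (1 - r2 r mu sigma))).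
  assert (bnd : forall y, Rmax M (Rmax (exp (lam * beta * h)) 1) < y -> c * y <= K).
  { intros y hy.
    assert (m1 := Rmax_l M (Rmax (exp (lam * beta * h)) 1)). assert (m2 := Rmax_r M (Rmax (exp (lam * beta * h)) 1)).
    assert (m3 := Rmax_l (exp (lam * beta * h)) 1). assert (m4 := Rmax_r (exp (lam * beta * h)) 1).
    specialize (HM y ltac:(lra)). simpl in HM.
    rewrite F1_expr in HM by (auto; lra). unfold L in HM.
    assert (hy1 : 1 < y) by lra.
    assert (hl : 0 < ln y) by (rewrite <- ln_1; apply ln_increasing; lra).
    assert (P1 : y <= Rpower y (r1 r mu sigma)).
    { unfold Rpower. rewrite <- (exp_ln y) at 1 by lra. left. apply exp_increasing. nra. }
    assert (P2 : Rpower y (r2 r mu sigma) <= 1).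
    { unfold Rpower. rewrite <- exp_0. left. apply exp_increasing. nra. }
    assert (P3 : 0 < Rpower y (r2 r mu sigma)) by apply exp_pos.
    assert (E : C1 h * (1 - r1 r mu sigma) * Rpower y (r1 r mu sigma) =
      (C1 h * (1 - r1 r mu sigma) * Rpower y (r1 r mu sigma) + C2 h * (1 - r2 r mu sigma) * Rpower y (r2 r mu sigma)
       - / (r * beta) * exp (lam * beta * h) - - / (r * beta) * exp (lam * beta * h))
      - C2 h * (1 - r2 r mu sigma) * Rpower y (r2 r mu sigma)) by ring.
    assert (A1 : Rabs (C1 h * (1 - r1 r mu sigma) * Rpower y (r1 r mu sigma)) <= 1 + Rabs (C2 h * (1 - r2 r mu sigma))).
    { rewrite E. eapply Rle_trans; [apply Rabs_triang|]. rewrite Rabs_Ropp.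
      rewrite (Rabs_mult (C2 h * _)), (Rabs_pos_eq (Rpower y (r2 r mu sigma))) by lra.
      assert (0 <= Rabs (C2 h * (1 - r2 r mu sigma))) by apply Rabs_pos. nra. }
    rewrite Rabs_mult, (Rabs_pos_eq (Rpower y (r1 r mu sigma))) in A1 by lra.
    unfold c, K. assert (0 <= Rabs (C1 h * (1 - r1 r mu sigma))) by apply Rabs_pos. nra. }
  assert (hc : c = 0).
  { destruct (Req_dec c 0) as [e|ne]; [exact e|]. exfalso.
    assert (cp : 0 < c) by (assert (0 <= c) by apply Rabs_pos; lra).
    assert (Kp : 0 < K) by (unfold K; assert (0 <= Rabs (C2 h * (1 - r2 r mu sigma))) by apply Rabs_pos; lra).
    set (y := Rmax M (Rmax (exp (lam * beta * h)) 1) + 1 + K / c).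
    assert (0 < K / c) by (apply Rdiv_lt_0_compat; lra).
    specialize (bnd y ltac:(unfold y; lra)).
    assert (K < c * y).
    { unfold y. assert (0 <= Rmax M (Rmax (exp (lam * beta * h)) 1)) by
        (assert (m := Rmax_r M (Rmax (exp (lam * beta * h)) 1)); assert (m' := Rmax_r (exp (lam * beta * h)) 1); lra).
      replace (c * (Rmax M (Rmax (exp (lam * beta * h)) 1) + 1 + K / c)) with
        (c * (Rmax M (Rmax (exp (lam * beta * h)) 1) + 1) + K) by (field; lra). nra. }
    lra. }
  unfold c in hc. apply Rabs_eq_0 in hc. apply Rmult_integral in hc. destruct hc; [assumption|lra].
Qed.



Lemma fitA_exist r mu sigma beta lam h : 0 < r -> 0 < beta -> r1 r mu sigma <> r2 r mu sigma ->
  v1 r mu sigma beta lam (fun _ => 0) (C2def r mu sigma beta lam) (exp (lam * beta * h)) h =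
  v2 r mu sigma beta lam (C3def r mu sigma beta lam) (C4def r mu sigma beta lam) (exp (lam * beta * h)) h /\
  dv1 r mu sigma (fun _ => 0) (C2def r mu sigma beta lam) (exp (lam * beta * h)) h =
  dv2 r mu sigma beta lam (C3def r mu sigma beta lam) (C4def r mu sigma beta lam) (exp (lam * beta * h)) h.
Proof.
  intros hr hb hne.
  assert (D1 := DefA1 r mu sigma beta lam h hr hb hne). assert (D2 := DefA2 r mu sigma beta lam h hr hb hne).
  cbv zeta in D1, D2.
  destruct (proj2 (lin_solve _ _ _ _ _ hne) (conj D1 D2)) as [E1 E2].
  assert (I1 := IdA1 r mu sigma beta lam (fun _ => 0) (C2def r mu sigma beta lam) (C3def r mu sigma beta lam) (C4def r mu sigma beta lam) h hr hb).
  assert (I2 := IdA2 r mu sigma beta lam (fun _ => 0) (C2def r mu sigma beta lam) (C3def r mu sigma beta lam) (C4def r mu sigma beta lam) h hr hb).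
  cbv zeta beta in I1, I2.
  split.
  - apply Rminus_diag_uniq_sym. rewrite I1. lra.
  - apply Rminus_diag_uniq_sym.
    assert (H : exp (lam * beta * h) * (dv2 r mu sigma beta lam (C3def r mu sigma beta lam) (C4def r mu sigma beta lam) (exp (lam * beta * h)) h -
      dv1 r mu sigma (fun _ => 0) (C2def r mu sigma beta lam) (exp (lam * beta * h)) h) = 0) by (rewrite I2; lra).
    apply Rmult_integral in H. destruct H as [H|H]; [|exact H].
    exfalso. assert (Hp := exp_pos (lam * beta * h)). lra.
Qed.

Lemma fitB_exist r mu sigma beta lam h : 0 < r -> 0 < beta -> r1 r mu sigma <> r2 r mu sigma ->
  v2 r mu sigma beta lam (C3def r mu sigma beta lam) (C4def r mu sigma beta lam) (exp ((lam - 1) * beta * h)) h =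
  v3 r mu sigma beta lam (C5def r mu sigma beta lam) (C6def r mu sigma beta lam) (exp ((lam - 1) * beta * h)) h /\
  dv2 r mu sigma beta lam (C3def r mu sigma beta lam) (C4def r mu sigma beta lam) (exp ((lam - 1) * beta * h)) h =
  dv3 r mu sigma (C5def r mu sigma beta lam) (C6def r mu sigma beta lam) (exp ((lam - 1) * beta * h)) h.
Proof.
  intros hr hb hne.
  assert (D1 := DefB1 r mu sigma beta lam h hr hb hne). assert (D2 := DefB2 r mu sigma beta lam h hr hb hne).
  cbv zeta in D1, D2.
  destruct (proj2 (lin_solve _ _ _ _ _ hne) (conj D1 D2)) as [E1 E2].
  assert (I1 := IdB1 r mu sigma beta lam (C3def r mu sigma beta lam) (C4def r mu sigma beta lam) (C5def r mu sigma beta lam) (C6def r mu sigma beta lam) h hr hb).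
  assert (I2 := IdB2 r mu sigma beta lam (C3def r mu sigma beta lam) (C4def r mu sigma beta lam) (C5def r mu sigma beta lam) (C6def r mu sigma beta lam) h hr hb).
  cbv zeta beta in I1, I2.
  split.
  - apply Rminus_diag_uniq. rewrite I1. lra.
  - apply Rminus_diag_uniq.
    assert (H : exp ((lam - 1) * beta * h) * (dv2 r mu sigma beta lam (C3def r mu sigma beta lam) (C4def r mu sigma beta lam) (exp ((lam - 1) * beta * h)) h -
      dv3 r mu sigma (C5def r mu sigma beta lam) (C6def r mu sigma beta lam) (exp ((lam - 1) * beta * h)) h) = 0) by (rewrite I2; lra).
    apply Rmult_integral in H. destruct H as [H|H]; [|exact H].
    exfalso. assert (Hp := exp_pos ((lam - 1) * beta * h)). lra.
Qed.

Lemma fitA_uniq r mu sigma beta lam C1 C2 C3 C4 h : 0 < r -> 0 < beta -> r1 r mu sigma <> r2 r mu sigma ->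
  C1 h = 0 ->
  v1 r mu sigma beta lam C1 C2 (exp (lam * beta * h)) h = v2 r mu sigma beta lam C3 C4 (exp (lam * beta * h)) h ->
  dv1 r mu sigma C1 C2 (exp (lam * beta * h)) h = dv2 r mu sigma beta lam C3 C4 (exp (lam * beta * h)) h ->
  C3 h = C3def r mu sigma beta lam h /\ C4 h - C2 h = C4def r mu sigma beta lam h - C2def r mu sigma beta lam h.
Proof.
  intros hr hb hne hC1 S1 S2.
  assert (D1 := DefA1 r mu sigma beta lam h hr hb hne). assert (D2 := DefA2 r mu sigma beta lam h hr hb hne).
  cbv zeta in D1, D2.
  assert (I1 := IdA1 r mu sigma beta lam C1 C2 C3 C4 h hr hb).
  assert (I2 := IdA2 r mu sigma beta lam C1 C2 C3 C4 h hr hb).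
  cbv zeta in I1, I2. rewrite hC1 in I1, I2. rewrite S1, Rminus_diag in I1. rewrite S2, Rminus_diag, Rmult_0_r in I2.
  set (X := C3 h * exp (r1 r mu sigma * (lam * beta * h))) in *.
  set (Y := (C4 h - C2 h) * exp (r2 r mu sigma * (lam * beta * h))) in *.
  set (c := cc r mu sigma beta (exp (lam * beta * h))) in *.
  assert (F1 : X + Y + c = 0) by lra.
  assert (F2 : r1 r mu sigma * X + r2 r mu sigma * Y + c = 0) by lra.
  destruct (proj1 (lin_solve _ _ _ _ _ hne) (conj F1 F2)) as [E1 E2].
  assert (P1 := exp_pos (r1 r mu sigma * (lam * beta * h))). assert (P2 := exp_pos (r2 r mu sigma * (lam * beta * h))).
  split.
  - apply Rmult_eq_reg_r with (exp (r1 r mu sigma * (lam * beta * h))); [|lra]. rewrite D1. unfold X in E1. exact E1.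
  - apply Rmult_eq_reg_r with (exp (r2 r mu sigma * (lam * beta * h))); [|lra]. rewrite D2. unfold Y in E2. exact E2.
Qed.

Lemma fitB_uniq r mu sigma beta lam C3 C4 C5 C6 h : 0 < r -> 0 < beta -> r1 r mu sigma <> r2 r mu sigma ->
  v2 r mu sigma beta lam C3 C4 (exp ((lam - 1) * beta * h)) h = v3 r mu sigma beta lam C5 C6 (exp ((lam - 1) * beta * h)) h ->
  dv2 r mu sigma beta lam C3 C4 (exp ((lam - 1) * beta * h)) h = dv3 r mu sigma C5 C6 (exp ((lam - 1) * beta * h)) h ->
  C3 h - C5 h = C3def r mu sigma beta lam h - C5def r mu sigma beta lam h /\
  C4 h - C6 h = C4def r mu sigma beta lam h - C6def r mu sigma beta lam h.
Proof.
  intros hr hb hne S1 S2.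
  assert (D1 := DefB1 r mu sigma beta lam h hr hb hne). assert (D2 := DefB2 r mu sigma beta lam h hr hb hne).
  cbv zeta in D1, D2.
  assert (I1 := IdB1 r mu sigma beta lam C3 C4 C5 C6 h hr hb).
  assert (I2 := IdB2 r mu sigma beta lam C3 C4 C5 C6 h hr hb).
  cbv zeta in I1, I2. rewrite S1, Rminus_diag in I1. rewrite S2, Rminus_diag, Rmult_0_r in I2.
  destruct (proj1 (lin_solve _ _ _ _ _ hne) (conj (eq_sym I1) (eq_sym I2))) as [E1 E2].
  assert (P1 := exp_pos (r1 r mu sigma * ((lam - 1) * beta * h))). assert (P2 := exp_pos (r2 r mu sigma * ((lam - 1) * beta * h))).
  split.
  - apply Rmult_eq_reg_r with (exp (r1 r mu sigma * ((lam - 1) * beta * h))); [|lra]. rewrite D1. exact E1.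
  - apply Rmult_eq_reg_r with (exp (r2 r mu sigma * ((lam - 1) * beta * h))); [|lra]. rewrite D2. exact E2.
Qed.



Lemma locd1 r mu sigma beta lam C1 C2 h y0 : 0 < y0 ->
  locally y0 (fun y => is_derive (fun z => v1 r mu sigma beta lam C1 C2 z h) y (dv1 r mu sigma C1 C2 y h)).
Proof. intros hy. apply (loc_intro _ _ y0 hy). intros y hyy. apply Rabs_def2 in hyy. apply is_derive_v1. lra. Qed.
Lemma locd2 r mu sigma beta lam C3 C4 h y0 : 0 < r -> 0 < beta -> 0 < y0 ->
  locally y0 (fun y => is_derive (fun z => v2 r mu sigma beta lam C3 C4 z h) y (dv2 r mu sigma beta lam C3 C4 y h)).
Proof. intros hr hb hy. apply (loc_intro _ _ y0 hy). intros y hyy. apply Rabs_def2 in hyy. apply is_derive_v2; auto; lra. Qed.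
Lemma locd3 r mu sigma beta lam C5 C6 h y0 : 0 < r -> 0 < y0 ->
  locally y0 (fun y => is_derive (fun z => v3 r mu sigma beta lam C5 C6 z h) y (dv3 r mu sigma C5 C6 y h)).
Proof. intros hr hy. apply (loc_intro _ _ y0 hy). intros y hyy. apply Rabs_def2 in hyy. apply is_derive_v3; auto; lra. Qed.

Lemma b_exist r mu sigma beta lam h : 0 < r -> 0 < beta -> r1 r mu sigma <> r2 r mu sigma -> 0 <= h ->
  C1_at (fun y => v r mu sigma beta lam (fun _ => 0) (C2def r mu sigma beta lam) (C3def r mu sigma beta lam)
    (C4def r mu sigma beta lam) (C5def r mu sigma beta lam) (C6def r mu sigma beta lam) y h) (exp (lam * beta * h)) /\
  C1_at (fun y => v r mu sigma beta lam (fun _ => 0) (C2def r mu sigma beta lam) (C3def r mu sigma beta lam)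
    (C4def r mu sigma beta lam) (C5def r mu sigma beta lam) (C6def r mu sigma beta lam) y h) (exp ((lam - 1) * beta * h)).
Proof.
  intros hr hb hne hh.
  destruct (fitA_exist r mu sigma beta lam h hr hb hne) as [FA1 FA2].
  destruct (fitB_exist r mu sigma beta lam h hr hb hne) as [FB1 FB2].
  assert (pa := exp_pos (lam * beta * h)). assert (pb := exp_pos ((lam - 1) * beta * h)).
  destruct (Rle_lt_or_eq_dec 0 h hh) as [hp|h0].
  - assert (hab := ab_lt beta lam h hb hp).
    split.
    + apply (glue _ (fun y => v2 r mu sigma beta lam (C3def r mu sigma beta lam) (C4def r mu sigma beta lam) y h)
              (fun y => v1 r mu sigma beta lam (fun _ => 0) (C2def r mu sigma beta lam) y h)
              (fun y => dv2 r mu sigma beta lam (C3def r mu sigma beta lam) (C4def r mu sigma beta lam) y h)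
              (fun y => dv1 r mu sigma (fun _ => 0) (C2def r mu sigma beta lam) y h)).
      * apply (loc_intro _ _ (exp (lam * beta * h) - exp ((lam - 1) * beta * h))); [lra|].
        intros y hy hya. apply Rabs_def2 in hy. apply reg2; lra.
      * apply (loc_intro _ _ 1); [lra|]. intros y _ hy. apply reg1; auto.
      * apply reg1'; auto.
      * simpl. symmetry. exact FA1.
      * apply locd2; auto.
      * apply locd1; auto.
      * apply cont_dv2; auto.
      * apply cont_dv1; auto.
      * symmetry. exact FA2.
    + apply (glue _ (fun y => v3 r mu sigma beta lam (C5def r mu sigma beta lam) (C6def r mu sigma beta lam) y h)
              (fun y => v2 r mu sigma beta lam (C3def r mu sigma beta lam) (C4def r mu sigma beta lam) y h)
              (fun y => dv3 r mu sigma (C5def r mu sigma beta lam) (C6def r mu sigma beta lam) y h)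
              (fun y => dv2 r mu sigma beta lam (C3def r mu sigma beta lam) (C4def r mu sigma beta lam) y h)).
      * apply (loc_intro _ _ 1); [lra|]. intros y _ hy. apply reg3; lra.
      * apply (loc_intro _ _ (exp (lam * beta * h) - exp ((lam - 1) * beta * h))); [lra|].
        intros y hy hya. apply Rabs_def2 in hy. apply reg2; lra.
      * rewrite reg3 by lra. symmetry. exact FB1.
      * symmetry. exact FB1.
      * apply locd3; auto.
      * apply locd2; auto.
      * apply cont_dv3; auto.
      * apply cont_dv2; auto.
      * symmetry. exact FB2.
  - subst h.
    assert (ea : exp (lam * beta * 0) = 1) by (rewrite Rmult_0_r; apply exp_0).
    assert (eb : exp ((lam - 1) * beta * 0) = 1) by (rewrite Rmult_0_r; apply exp_0).
    rewrite ea in FA1, FA2 |- *. rewrite eb in FB1, FB2 |- *.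
    assert (G : C1_at (fun y => v r mu sigma beta lam (fun _ => 0) (C2def r mu sigma beta lam) (C3def r mu sigma beta lam)
      (C4def r mu sigma beta lam) (C5def r mu sigma beta lam) (C6def r mu sigma beta lam) y 0) 1).
    { apply (glue _ (fun y => v3 r mu sigma beta lam (C5def r mu sigma beta lam) (C6def r mu sigma beta lam) y 0)
              (fun y => v1 r mu sigma beta lam (fun _ => 0) (C2def r mu sigma beta lam) y 0)
              (fun y => dv3 r mu sigma (C5def r mu sigma beta lam) (C6def r mu sigma beta lam) y 0)
              (fun y => dv1 r mu sigma (fun _ => 0) (C2def r mu sigma beta lam) y 0)).
      * apply (loc_intro _ _ 1); [lra|]. intros y _ hy. apply reg3; lra.
      * apply (loc_intro _ _ 1); [lra|]. intros y _ hy. apply reg1; lra.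
      * rewrite reg3 by lra. rewrite <- FB1, <- FA1. reflexivity.
      * rewrite <- FB1, <- FA1. reflexivity.
      * apply locd3; auto; lra.
      * apply locd1; lra.
      * apply cont_dv3; lra.
      * apply cont_dv1; lra.
      * rewrite <- FB2, <- FA2. reflexivity. }
    split; exact G.
Qed.



Lemma der_cont (f : R -> R) y d : is_derive f y d -> continuous f y.
Proof. intros H. apply (ex_derive_continuous (K := R_AbsRing) (V := R_NormedModule)). exists d. exact H. Qed.

Lemma b_uniq r mu sigma beta lam C1 C2 C3 C4 C5 C6 h : 0 < r -> 0 < beta -> 0 < h ->
  C1_at (fun y => v r mu sigma beta lam C1 C2 C3 C4 C5 C6 y h) (exp (lam * beta * h)) ->
  C1_at (fun y => v r mu sigma beta lam C1 C2 C3 C4 C5 C6 y h) (exp ((lam - 1) * beta * h)) ->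
  v1 r mu sigma beta lam C1 C2 (exp (lam * beta * h)) h = v2 r mu sigma beta lam C3 C4 (exp (lam * beta * h)) h /\
  dv1 r mu sigma C1 C2 (exp (lam * beta * h)) h = dv2 r mu sigma beta lam C3 C4 (exp (lam * beta * h)) h /\
  v2 r mu sigma beta lam C3 C4 (exp ((lam - 1) * beta * h)) h = v3 r mu sigma beta lam C5 C6 (exp ((lam - 1) * beta * h)) h /\
  dv2 r mu sigma beta lam C3 C4 (exp ((lam - 1) * beta * h)) h = dv3 r mu sigma C5 C6 (exp ((lam - 1) * beta * h)) h.
Proof.
  intros hr hb hh [[Da Dfa] _] [[Db Dfb] _].
  set (f := fun y => v r mu sigma beta lam C1 C2 C3 C4 C5 C6 y h) in *.
  set (a := exp (lam * beta * h)) in *. set (b := exp ((lam - 1) * beta * h)) in *.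
  assert (pa : 0 < a) by apply exp_pos. assert (pb : 0 < b) by apply exp_pos.
  assert (hab : b < a) by (apply ab_lt; auto).
  assert (Ia1 := is_derive_v1 r mu sigma beta lam C1 C2 a h pa).
  assert (Ia2 := is_derive_v2 r mu sigma beta lam C3 C4 a h hr hb pa).
  assert (Ib2 := is_derive_v2 r mu sigma beta lam C3 C4 b h hr hb pb).
  assert (Ib3 := is_derive_v3 r mu sigma beta lam C5 C6 b h hr pb).
  assert (fa1 : f a = v1 r mu sigma beta lam C1 C2 a h) by (unfold f; apply reg1'; auto).
  assert (fb3 : f b = v3 r mu sigma beta lam C5 C6 b h) by (unfold f; apply reg3; fold b; lra).
  assert (fa2 : f a = v2 r mu sigma beta lam C3 C4 a h).
  { apply (side_val f (fun y => v2 r mu sigma beta lam C3 C4 y h) a (a - b) (-1)); [lra|ring| |apply (der_cont _ _ _ Dfa)|apply (der_cont _ _ _ Ia2)].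
    intros t ht. unfold f. apply reg2; fold a b; lra. }
  assert (fb2 : f b = v2 r mu sigma beta lam C3 C4 b h).
  { apply (side_val f (fun y => v2 r mu sigma beta lam C3 C4 y h) b (a - b) 1); [lra|ring| |apply (der_cont _ _ _ Dfb)|apply (der_cont _ _ _ Ib2)].
    intros t ht. unfold f. apply reg2; fold a b; lra. }
  assert (da2 : Da = dv2 r mu sigma beta lam C3 C4 a h).
  { apply (side_der f (fun y => v2 r mu sigma beta lam C3 C4 y h) a (a - b) (-1)); auto; [lra|ring|].
    intros t ht. unfold f. apply reg2; fold a b; lra. }
  assert (da1 : Da = dv1 r mu sigma C1 C2 a h).
  { apply (side_der f (fun y => v1 r mu sigma beta lam C1 C2 y h) a 1 1); auto; [lra|ring|].
    intros t ht. unfold f. apply reg1; fold a; lra. }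
  assert (db2 : Db = dv2 r mu sigma beta lam C3 C4 b h).
  { apply (side_der f (fun y => v2 r mu sigma beta lam C3 C4 y h) b (a - b) 1); auto; [lra|ring|].
    intros t ht. unfold f. apply reg2; fold a b; lra. }
  assert (db3 : Db = dv3 r mu sigma C5 C6 b h).
  { apply (side_der f (fun y => v3 r mu sigma beta lam C5 C6 y h) b 1 (-1)); auto; [lra|ring|].
    intros t ht. unfold f. apply reg3; fold b; lra. }
  repeat split; congruence.
Qed.



Lemma ode_C6 r mu sigma beta lam C5 C6 h : 0 < r -> 0 < beta -> 0 < lam -> lam < 1 ->
  1 < r1 r mu sigma -> r1 r mu sigma + r2 r mu sigma = 1 ->
  kappa r mu sigma ^ 2 = -2 * r / (r1 r mu sigma * r2 r mu sigma) ->
  r1 r mu sigma - r2 r mu sigma <> 0 -> 0 < h ->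
  (forall k, 0 < k -> C5 k = C5def r mu sigma beta lam k) ->
  deriv_nonneg (fun k => v3 r mu sigma beta lam C5 C6 (ybdry beta lam h) k) h 0 ->
  is_derive C6 h (dC6 r mu sigma beta lam h).
Proof.
  intros hr hb hl0 hl1 hr1 hsum hk hne hh E5 Dn.
  apply nonneg_to_derive in Dn; [|exact hh].
  set (Y := ybdry beta lam h) in *.
  set (P1 := Rpower Y (r1 r mu sigma)). set (P2 := Rpower Y (r2 r mu sigma)).
  assert (hP2 : 0 < P2) by apply exp_pos.
  set (F := fun k => v3 r mu sigma beta lam C5 C6 Y k) in *.
  set (H := fun k => - C5def r mu sigma beta lam k * P1 + / r * k * Y + / (r * beta) * exp ((lam - 1) * beta * k)).
  set (dH := - dC5 r mu sigma beta lam h * P1 + / r * Y + / (r * beta) * ((lam - 1) * beta * exp ((lam - 1) * beta * h))).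
  assert (DH : is_derive H h dH).
  { unfold H, dH, C5def, dC5. auto_derive; [exact I|]. field. repeat split; lra. }
  assert (DFH : is_derive (fun k => F k + H k) h (0 + dH)) by exact (is_derive_plus F H h 0 dH Dn DH).
  assert (DG := is_derive_scal (fun k => F k + H k) h (/ P2) (0 + dH) DFH).
  apply (is_derive_ext_loc (fun k => / P2 * (F k + H k))).
  { apply (loc_intro _ _ h hh). intros k hkk. apply Rabs_def2 in hkk.
    unfold F, H, v3. rewrite E5 by lra. fold P1 P2. match goal with |- ?a = ?b => change (@eq R a b) end. field. lra. }
  replace (dC6 r mu sigma beta lam h) with (/ P2 * (0 + dH)); [exact DG|].
  assert (K := key_c r mu sigma beta lam h hr hb hl0 hl1 hr1 hsum hk). cbv zeta in K. fold Y P1 P2 in K.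
  unfold dH. apply Rmult_eq_reg_l with P2; [|lra].
  rewrite <- Rmult_assoc, Rinv_r, Rmult_1_l by lra. lra.
Qed.



Lemma const_zero (D : R -> R) : (forall h, 0 < h -> is_derive D h 0) -> is_lim D p_infty 0 ->
  forall h, 0 < h -> D h = 0.
Proof.
  intros HD HL.
  assert (C : forall h, 0 < h -> D h = D 1).
  { intros h hh.
    destruct (MVT_gen D 1 h (fun _ => 0)) as [c [_ Hc]].
    - intros x hx. apply HD. assert (m := Rmin_glb_lt 1 h 0 ltac:(lra) hh). lra.
    - intros x hx. apply continuity_pt_filterlim. apply (der_cont _ _ 0). apply HD.
      assert (m := Rmin_glb_lt 1 h 0 ltac:(lra) hh). lra.
    - lra. }
  assert (L1 : is_lim (fun _ => D 1) p_infty 0).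
  { apply (is_lim_ext_loc D); [|exact HL]. exists 0. intros x hx. apply C. exact hx. }
  assert (U1 := is_lim_unique _ _ _ L1). assert (U2 := is_lim_unique _ _ _ (is_lim_const (D 1) p_infty)).
  rewrite U1 in U2. injection U2. intros e h hh. rewrite C by exact hh. auto.
Qed.

Lemma diff_of_ex f : (forall h, ex_derive f h) -> differentiable_nonneg f.
Proof.
  intros H h _. destruct (H h) as [d Hd]. exists d. apply derive_to_nonneg. exact Hd.
Qed.

Lemma ex_C2 r mu sigma beta lam h : ex_derive (C2def r mu sigma beta lam) h.
Proof. unfold C2def, C6def. auto_derive. exact I. Qed.
Lemma ex_C3 r mu sigma beta lam h : ex_derive (C3def r mu sigma beta lam) h.
Proof. unfold C3def. auto_derive. exact I. Qed.
Lemma ex_C4 r mu sigma beta lam h : ex_derive (C4def r mu sigma beta lam) h.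
Proof. unfold C4def, C6def. auto_derive. exact I. Qed.
Lemma ex_C5 r mu sigma beta lam h : ex_derive (C5def r mu sigma beta lam) h.
Proof. unfold C5def. auto_derive. exact I. Qed.
Lemma ex_C6 r mu sigma beta lam h : ex_derive (C6def r mu sigma beta lam) h.
Proof. unfold C6def. auto_derive. exact I. Qed.

Lemma ex_cont (f : R -> R) x : ex_derive f x -> continuous f x.
Proof. intros [d H]. exact (der_cont f x d H). Qed.

Lemma c_exist r mu sigma beta lam h : 0 < r -> 0 < beta -> 0 < lam -> lam < 1 ->
  1 < r1 r mu sigma -> r1 r mu sigma + r2 r mu sigma = 1 ->
  kappa r mu sigma ^ 2 = -2 * r / (r1 r mu sigma * r2 r mu sigma) ->
  r1 r mu sigma - r2 r mu sigma <> 0 -> 1 - r2 r mu sigma <> 0 ->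
  lam * (1 - r2 r mu sigma) - (r1 r mu sigma - r2 r mu sigma) <> 0 ->
  deriv_nonneg (fun k => v3 r mu sigma beta lam (C5def r mu sigma beta lam) (C6def r mu sigma beta lam) (ybdry beta lam h) k) h 0.
Proof.
  intros hr hb hl0 hl1 hr1 hsum hk hne h1 h2.
  apply derive_to_nonneg.
  assert (K := key_c r mu sigma beta lam h hr hb hl0 hl1 hr1 hsum hk). cbv zeta in K.
  rewrite <- K.
  set (Y := ybdry beta lam h).
  unfold v3, C5def, C6def, dC5, dC6. auto_derive; [exact I|]. field. repeat split; lra.
Qed.



Theorem proposition3p1 (r mu sigma beta lam : R)
  (hr : 0 < r) (hmu : r < mu) (hsigma : 0 < sigma) (hbeta : 0 < beta)
  (hlam0 : 0 < lam) (hlam1 : lam < 1) :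
  admissible r mu sigma beta lam (fun _ => 0)
    (C2def r mu sigma beta lam) (C3def r mu sigma beta lam)
    (C4def r mu sigma beta lam) (C5def r mu sigma beta lam)
    (C6def r mu sigma beta lam) /\
  (forall C1 C2 C3 C4 C5 C6 : R -> R,
     admissible r mu sigma beta lam C1 C2 C3 C4 C5 C6 ->
     forall h, 0 <= h ->
       C1 h = 0 /\ C2 h = C2def r mu sigma beta lam h /\
       C3 h = C3def r mu sigma beta lam h /\ C4 h = C4def r mu sigma beta lam h /\
       C5 h = C5def r mu sigma beta lam h /\ C6 h = C6def r mu sigma beta lam h).
Proof.
  destruct (basic_facts r mu sigma hr hmu hsigma) as [hk0 [hr1 [hr2 [hsum hprod]]]].
  assert (hk : kappa r mu sigma ^ 2 = -2 * r / (r1 r mu sigma * r2 r mu sigma)).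
  { rewrite <- hprod. field. split; lra. }
  assert (hne : r1 r mu sigma <> r2 r mu sigma) by lra.
  assert (hne' : r1 r mu sigma - r2 r mu sigma <> 0) by lra.
  assert (h1r2 : 1 - r2 r mu sigma <> 0) by lra.
  assert (h2 : lam * (1 - r2 r mu sigma) - (r1 r mu sigma - r2 r mu sigma) <> 0) by nra.
  split.
  - unfold admissible. cbv zeta.
    split; [|split; [|split; [|split]]].
    + repeat split; apply diff_of_ex; intros h.
      * apply (ex_derive_const (K := R_AbsRing) (V := R_NormedModule)).
      * apply ex_C2.
      * apply ex_C3.
      * apply ex_C4.
      * apply ex_C5.
      * apply ex_C6.
    + intros h hh. apply a_exist; auto.
    + intros h hh. apply b_exist; auto.
    + intros h hh. apply c_exist; auto.
    + apply lim_C6; auto.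
  - intros C1 C2 C3 C4 C5 C6 Hadm.
    unfold admissible in Hadm. cbv zeta in Hadm.
    destruct Hadm as [[d1 [d2 [d3 [d4 [d5 d6]]]]] [Ha [Hb [Hc Hd]]]].
    assert (E1 : forall h, 0 <= h -> C1 h = 0).
    { intros h hh. exact (C1_zero r mu sigma beta lam C1 C2 C3 C4 C5 C6 h hr hbeta hh hr1 hr2 (Ha h hh)). }
    assert (Epos : forall h, 0 < h ->
      C3 h = C3def r mu sigma beta lam h /\ C4 h - C2 h = C4def r mu sigma beta lam h - C2def r mu sigma beta lam h /\
      C5 h = C5def r mu sigma beta lam h /\ C4 h - C6 h = C4def r mu sigma beta lam h - C6def r mu sigma beta lam h).
    { intros h hh. destruct (Hb h ltac:(lra)) as [Ba Bb].
      destruct (b_uniq r mu sigma beta lam C1 C2 C3 C4 C5 C6 h hr hbeta hh Ba Bb) as [S1 [S2 [S3 S4]]].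
      destruct (fitA_uniq r mu sigma beta lam C1 C2 C3 C4 h hr hbeta hne (E1 h ltac:(lra)) S1 S2) as [A1 A2].
      destruct (fitB_uniq r mu sigma beta lam C3 C4 C5 C6 h hr hbeta hne S3 S4) as [B1 B2].
      repeat split; auto; lra. }
    assert (E6 : forall h, 0 < h -> C6 h = C6def r mu sigma beta lam h).
    { intros h hh.
      assert (Z := const_zero (fun k => C6 k - C6def r mu sigma beta lam k)).
      apply Rminus_diag_uniq. refine (Z _ _ h hh).
      - intros k hk'. 
        assert (D1 := ode_C6 r mu sigma beta lam C5 C6 k hr hbeta hlam0 hlam1 hr1 hsum hk hne' hk'
                        (fun j hj => proj1 (proj2 (proj2 (Epos j hj)))) (Hc k ltac:(lra))).
        assert (D2 := is_derive_C6 r mu sigma beta lam k ltac:(lra) ltac:(lra) hne' h1r2 h2).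
        assert (D3 := is_derive_minus _ _ _ _ _ D1 D2).
        replace 0 with (minus (dC6 r mu sigma beta lam k) (dC6 r mu sigma beta lam k)).
        + exact D3.
        + unfold minus, plus, opp. simpl. ring.
      - replace 0 with (0 - 0) by ring. apply is_lim_minus'; [exact Hd|apply lim_C6; auto]. }
    assert (Epos' : forall h, 0 < h ->
       C2 h = C2def r mu sigma beta lam h /\ C3 h = C3def r mu sigma beta lam h /\
       C4 h = C4def r mu sigma beta lam h /\ C5 h = C5def r mu sigma beta lam h /\ C6 h = C6def r mu sigma beta lam h).
    { intros h hh. destruct (Epos h hh) as [A [B [C D]]]. assert (F := E6 h hh).
      repeat split; lra. }
    intros h hh. split; [apply E1; exact hh|].
    destruct (Rle_lt_or_eq_dec 0 h hh) as [hp|h0]; [apply Epos'; exact hp|].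
    subst h.
    assert (R : forall (f g : R -> R), differentiable_nonneg f -> (forall k, ex_derive g k) ->
               (forall k, 0 < k -> f k = g k) -> f 0 = g 0).
    { intros f g df eg E. destruct (df 0 (Rle_refl 0)) as [d0 Hd0].
      apply (nonneg_right_eq f g d0 Hd0 E). apply ex_cont. apply eg. }
    repeat split; apply R; auto.
    + apply ex_C2.
    + intros k hk'. apply (Epos' k hk').
    + apply ex_C3.
    + intros k hk'. apply (Epos' k hk').
    + apply ex_C4.
    + intros k hk'. apply (Epos' k hk').
    + apply ex_C5.
    + intros k hk'. apply (Epos' k hk').
    + apply ex_C6.
Qed.
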